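(* If $q=p^{2r}$ where $p$ is an odd prime and $r\ge1$ is an integer, then $\chi(ER_q)\le 4\sqrt{q}+1$.
   Context: For a prime power $q$, $ER_q$ is the graph whose vertices are the points of $PG(2,q)$, i.e. the $1$-dimensional subspaces of $\mathbb{F}_q^3$, where distinct vertices $(x_0,x_1,x_2)$ and $(y_0,y_1,y_2)$ (homogeneous coordinates) are adjacent if and only if $x_0y_0+x_1y_1+x_2y_2=0$. $\chi$ denotes the chromatic number. *)

(* Defs.v *)
From HB Require Import structures.
From mathcomp Require Import all_boot all_order all_algebra all_field.
Set Implicit Arguments. Unset Strict Implicit. Unset Printing Implicit Defensive.
Import GRing.Theory.
Local Open Scope ring_scope.

Definition vec3 (F : finFieldType) := 'rV[F]_3.

Definition span1 (F : finFieldType) (v : 'rV[F]_3) : {set 'rV[F]_3} :=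
  [set a *: v | a : F].

Definition is_proj_point (F : finFieldType) (S : {set 'rV[F]_3}) : bool :=
  [exists v : 'rV[F]_3, (v != 0) && (S == span1 v)].

Definition PG2 (F : finFieldType) := {S : {set 'rV[F]_3} | is_proj_point S}.

Definition dot3 (F : finFieldType) (x y : 'rV[F]_3) : F :=
  \sum_(i < 3) x ord0 i * y ord0 i.

(* Adjacency in ER_q: distinct points whose (nonzero) representatives are
   orthogonal.  (Orthogonality does not depend on the representatives.) *)
Definition ER_adj (F : finFieldType) : rel (PG2 F) :=
  fun P Q => (P != Q) &&
    [exists x in val P, exists y in val Q,
        [&& x != 0, y != 0 & dot3 x y == 0]].

Definition colorable (T : finType) (e : rel T) (k : nat) : bool :=
  [exists f : {ffun T -> 'I_k}, [forall x, forall y, e x y ==> (f x != f y)]].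

(* The least k such that e is k-colourable (any loopless graph on T is
   #|T|-colourable, so the search range 0..#|T| suffices). *)
Definition chromatic_number (T : finType) (e : rel T) : nat :=
  find (colorable e) (iota 0 #|T|.+1).

(* Main.v *)
Require Import Defs.
From mathcomp Require Import all_boot all_order all_algebra all_field all_fingroup all_solvable.
From mathcomp Require Import zify ring.
Set Implicit Arguments. Unset Strict Implicit. Unset Printing Implicit Defensive.
Import GRing.Theory.
Local Open Scope ring_scope.


Section Frob.
Variables (F : finFieldType) (p r : nat).
Hypotheses (pp : prime p) (hr : (0 < r)%N) (hF : #|F| = (p ^ (2 * r))%N).
Let s := (p ^ r)%N.
Lemma pchF : p \in [pchar F].
Proof. exact: card_finPcharP hF pp. Qed.
Lemma s_nat : [pchar F].-nat s.
Proof.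
rewrite /s pnatX (pnatE _ pp) pchF; by case: r.
Qed.
Lemma frD (x y : F) : (x + y) ^+ s = x ^+ s + y ^+ s.
Proof. exact: exprDn_pchar s_nat. Qed.
Lemma frN (x : F) : (- x) ^+ s = - x ^+ s.
Proof.
have s0 : s != 0%N by rewrite /s expn_eq0 negb_and -lt0n (prime_gt0 pp).
apply/eqP; rewrite -addr_eq0 -frD addNr expr0n (negPf s0) //. Qed.
Lemma frB (x y : F) : (x - y) ^+ s = x ^+ s - y ^+ s.
Proof. by rewrite frD frN. Qed.
Lemma frfr (x : F) : (x ^+ s) ^+ s = x.
Proof. by rewrite -exprM /s -expnD addnn -mul2n -hF expf_card. Qed.
End Frob.


Definition o0 : 'I_3 := @Ordinal 3 0 isT.
Definition o1 : 'I_3 := @Ordinal 3 1 isT.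
Definition o2 : 'I_3 := @Ordinal 3 2 isT.

Lemma dot3E (F : finFieldType) (x y : 'rV[F]_3) :
  dot3 x y = x ord0 o0 * y ord0 o0 + x ord0 o1 * y ord0 o1 + x ord0 o2 * y ord0 o2.
Proof.
rewrite /dot3 !big_ord_recr big_ord0 /= add0r.
by congr (_ * _ + _ * _ + _ * _); congr (_ _ _); apply/val_inj.
Qed.

Lemma rowP3 (F : finFieldType) (x y : 'rV[F]_3) :
  x ord0 o0 = y ord0 o0 -> x ord0 o1 = y ord0 o1 -> x ord0 o2 = y ord0 o2 -> x = y.
Proof.
move=> h0 h1 h2; apply/rowP => j.
have : (val j < 3)%N := ltn_ord j.
case: j => [[|[|[|]]] Hj] _ //=.
- by rewrite (_ : Ordinal Hj = o0) //; apply/val_inj.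
- by rewrite (_ : Ordinal Hj = o1) //; apply/val_inj.
- by rewrite (_ : Ordinal Hj = o2) //; apply/val_inj.
Qed.
Lemma card_roots_le (F : finFieldType) (n m : nat) (c : F) : (m < n)%N ->
  (#|[set x : F | (x ^+ n == c * x ^+ m)%R]| <= n)%N.
Proof.
move=> mn.
set P : {poly F} := 'X^n - c *: 'X^m.
have szP : size P = n.+1.
  rewrite /P size_addl ?size_polyXn // size_polyN.
  by apply: leq_ltn_trans (size_scale_leq _ _) _; rewrite size_polyXn ltnS.
have P0 : P != 0 by rewrite -size_poly_eq0 szP.
have := max_poly_roots P0 (_ : all (root P) (enum [set x : F | x ^+ n == c * x ^+ m])) (enum_uniq _).
rewrite szP -cardE ltnS; apply.
apply/allP => x; rewrite mem_enum inE => /eqP hx.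
by rewrite /root /P !hornerE hx subrr.
Qed.

Lemma two_neq0 (F : finFieldType) (p : nat) : p \in [pchar F] -> odd p -> (2%:R : F) != 0.
Proof.
move=> ch op; rewrite -(dvdn_pcharf ch) (dvdn_prime2 (pcharf_prime ch)) //.
by apply/negP => /eqP h; move: op; rewrite h.
Qed.

Definition sg (F : finFieldType) (u : F) := (enum_rank u < enum_rank (- u))%N.

Lemma sgN (F : finFieldType) (u : F) : (2%:R : F) != 0 -> sg u = sg (- u) -> u = 0.
Proof.
move=> h2; rewrite /sg opprK => e.
have : enum_rank u = enum_rank (- u).
  apply/val_inj/eqP; rewrite eqn_leq; apply/andP; split; rewrite leqNgt; apply/negP=> H.
  - by move: (H); rewrite -e => /(ltn_trans H); rewrite ltnn.
  - by move: (H); rewrite e => /(ltn_trans H); rewrite ltnn.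
move/enum_rank_inj => /eqP; rewrite -subr_eq0 opprK -mulr2n -mulr_natr mulf_eq0 (negPf h2) orbF.
by move/eqP.
Qed.


Lemma sqrt_m1 (F : finFieldType) (n : nat) : (0 < n)%N -> #|F|.-1 = (4 * n)%N -> exists i : F, i ^+ 2 = -1.
Proof.
move=> n0 e4.
have /cyclicP [u hu] := field_unit_group_cyclic [set: {unit F}]%G.
have ou : #[u]%g = #|F|.-1 by rewrite orderE -hu card_finField_unit.
have ndv : (n %| #[u]%g)%N by rewrite ou e4 dvdn_mull.
set w := (u ^+ n)%g.
have ow : #[w]%g = 4%N.
  by rewrite /w orderXdiv // ou e4 mulnK.
exists (val w).
have : (val w ^+ 2) ^+ 2 = 1.
  by rewrite -exprM -FinRing.val_unitX (_ : (2*2)%N = #[w]%g) ?expg_order // ow.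
move/eqP; rewrite sqrf_eq1 => /orP [/eqP h|/eqP //].
have : (w ^+ 2)%g = 1%g by apply/val_inj; rewrite FinRing.val_unitX h.
move/eqP; rewrite -order_dvdn ow //.
Qed.



Section Col.
Variables (F : finFieldType) (s : nat) (i xi : F).
Hypotheses (hi : i ^+ 2 = -1) (h2 : (2%:R : F) != 0) (xi0 : xi != 0)
  (frD : forall x y : F, (x + y) ^+ s = x ^+ s + y ^+ s)
  (frN : forall x : F, (- x) ^+ s = - x ^+ s)
  (frfr : forall x : F, (x ^+ s) ^+ s = x)
  (hxi : (xi ^+ 2) ^+ s != xi ^+ 2).

Local Notation fr x := (x ^+ s).
Local Notation c0 v := (v ord0 o0).
Local Notation c1 v := (v ord0 o1).
Local Notation c2 v := (v ord0 o2).
Definition Xc (v : 'rV[F]_3) := c0 v + i * c1 v.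
Definition Yc (v : 'rV[F]_3) := c0 v - i * c1 v.

Lemma i0 : i != 0.
Proof. by apply/eqP => h; move: hi; rewrite h expr0n /= => /eqP; rewrite eq_sym oppr_eq0 oner_eq0. Qed.

Lemma dotXY v w : 2%:R * dot3 v w = Xc v * Yc w + Yc v * Xc w + 2%:R * (c2 v * c2 w).
Proof.
rewrite dot3E /Xc /Yc.
have -> : (c0 v + i * c1 v) * (c0 w - i * c1 w) + (c0 v - i * c1 v) * (c0 w + i * c1 w)
   = 2%:R * (c0 v * c0 w) - 2%:R * i ^+ 2 * (c1 v * c1 w) by ring.
rewrite hi; ring.
Qed.

Lemma dotvv v : dot3 v v = Xc v * Yc v + c2 v ^+ 2.
Proof.
apply: (mulfI h2); rewrite dotXY; ring.
Qed.

Lemma propl v w l : Xc w = l * Xc v -> Yc w = l * Yc v -> c2 w = l * c2 v -> w = l *: v.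
Proof.
move=> hX hY hZ.
have c0E (u : 'rV[F]_3) : c0 u = (Xc u + Yc u) / 2%:R.
  by apply: (mulIf h2); rewrite divfK // /Xc /Yc; ring.
have c1E (u : 'rV[F]_3) : c1 u = (Xc u - Yc u) / (2%:R * i).
  apply: (mulIf (mulf_neq0 h2 i0)); rewrite divfK ?mulf_neq0 ?i0 // /Xc /Yc; ring.
apply: rowP3; rewrite !mxE.
- by rewrite !c0E hX hY; field.
- rewrite !c1E hX hY; field; by rewrite ?mulf_neq0 ?i0.
- by [].
Qed.

Lemma vec0 v : Xc v = 0 -> Yc v = 0 -> c2 v = 0 -> v = 0.
Proof.
move=> a b c; rewrite (@propl v v 0) ?scale0r // ?mul0r //.
Qed.

Definition V1 := xi ^+ 2 - fr (xi ^+ 2).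

Definition colc (a t : F) : option (bool * F * bool) :=
  if t == 0 then None
  else if fr t != t then Some (true, a - fr a, sg (t - fr t))
  else Some (false, a / xi - fr (a / xi), sg (t / xi ^+ 2 - fr (t / xi ^+ 2))).

Definition astar (v : 'rV[F]_3) := - Yc v / (2%:R * c2 v).

Definition coli (v : 'rV[F]_3) : option (bool * F * bool) :=
  if c2 v == 0 then None
  else Some (true, if astar v - fr (astar v) == 0 then V1 else 0, true).

Definition av (v : 'rV[F]_3) := c2 v / Xc v.
Definition tv (v : 'rV[F]_3) := dot3 v v / Xc v ^+ 2.

Definition col (v : 'rV[F]_3) := if Xc v == 0 then coli v else colc (av v) (tv v).


Lemma fr_key (t t' a a' : F) : t + t' = (a - a') ^+ 2 -> a - fr a = a' - fr a' ->
  sg (t - fr t) = sg (t' - fr t') -> fr t = t.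
Proof.
move=> e ea es.
have fa : fr a = a - (a' - fr a') by rewrite -ea; ring.
have d : fr (a - a') = a - a' by rewrite frD frN fa; ring.
have ft : fr t + fr t' = t + t' by rewrite -frD e -exprAC d.
have ft' : fr t' = t + t' - fr t by rewrite -ft; ring.
have e2 : t' - fr t' = - (t - fr t) by rewrite ft'; ring.
rewrite e2 in es; move/(sgN h2): es => /eqP; rewrite subr_eq0 => /eqP h; exact: esym h.
Qed.

Lemma colc_ok (a t a' t' : F) : t + t' = (a - a') ^+ 2 -> colc a t = colc a' t' -> t = 0 /\ t' = 0.
Proof.
rewrite /colc => e.
case: (eqVneq t 0) => t0; case: (eqVneq t' 0) => t'0 //.
1,2: by case: ifP.
case: ifP => ft; case: ifP => ft' //; case=> ea es; exfalso.
  by move/negP: ft; apply; apply/eqP; exact: fr_key e ea es.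
have ez : t / xi ^+ 2 + t' / xi ^+ 2 = (a / xi - a' / xi) ^+ 2.
  by rewrite -mulrDl e; field.
have := fr_key ez ea es.
move/negbFE/eqP: ft => ft.
rewrite expr_div_n ft => /(mulfI t0) /invr_inj /eqP.
by move=> h; move: hxi; rewrite h.
Qed.


Lemma dot3C (v w : 'rV[F]_3) : dot3 v w = dot3 w v.
Proof. by rewrite !dot3E; ring. Qed.

Lemma chart_id v w : Xc v != 0 -> Xc w != 0 ->
  2%:R * dot3 v w = (tv v + tv w - (av v - av w) ^+ 2) * (Xc v * Xc w).
Proof. by move=> hv hw; rewrite dotXY /tv /av !dotvv; field; rewrite hv hw. Qed.

Lemma V1_neq0 : V1 != 0.
Proof. by rewrite /V1 subr_eq0 eq_sym. Qed.

Lemma mixed v w : Xc v != 0 -> Xc w = 0 -> w != 0 -> dot3 v w = 0 ->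
  colc (av v) (tv v) = coli w -> False.
Proof.
move=> Xv Xw w0 d0 ec.
have e2 := dotXY v w; rewrite d0 mulr0 Xw mulr0 addr0 in e2.
move: ec; rewrite /coli; case: (eqVneq (c2 w) 0) => cw.
  move=> _; move: e2; rewrite cw mulr0 mulr0 addr0 => /esym /eqP.
  rewrite mulf_eq0 (negPf Xv) /= => /eqP Yw.
  by move/eqP: w0; apply; apply: vec0.
have hXY : Xc v * Yc w = - (2%:R * (c2 v * c2 w)).
  by apply/eqP; rewrite -addr_eq0 -e2.
have hY : Yc w = - (2%:R * (c2 v * c2 w)) / Xc v by rewrite -hXY; field.
have ha : av v = astar w.
  by rewrite /av /astar hY; field; rewrite cw h2 Xv.
rewrite /colc; case: ifP => // _; case: ifP => // _; case=> ea _.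
move: ea; rewrite ha; case: eqP => [-> /esym /eqP|]; first by rewrite (negPf V1_neq0).
by move=> h /eqP; rewrite (negPf (introN eqP h)).
Qed.

Lemma col_ok v w : v != 0 -> w != 0 -> dot3 v w = 0 -> col v = col w ->
  exists l, w = l *: v.
Proof.
move=> v0 w0 d0; rewrite /col.
have e2 := dotXY v w; rewrite d0 mulr0 in e2.
case: (eqVneq (Xc v) 0) => Xv; case: (eqVneq (Xc w) 0) => Xw.
- rewrite Xv Xw !mul0r mulr0 !add0r in e2.
  rewrite /coli; case: (eqVneq (c2 v) 0) => cv; case: (eqVneq (c2 w) 0) => cw //.
  + move=> _; exists (Yc w / Yc v).
    have Yv : Yc v != 0 by apply/eqP => Yv; move/eqP: v0; apply; apply: vec0.
    by apply: propl; rewrite ?Xv ?Xw ?cv ?cw ?mulr0 ?divfK.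
  + by move: e2 => /esym /eqP; rewrite !mulf_eq0 (negPf h2) (negPf cv) (negPf cw).
- by move=> ec; exfalso; apply: (mixed Xw Xv v0 _ (esym ec)); rewrite dot3C.
- by move=> ec; exfalso; apply: (mixed Xv Xw w0 d0 ec).
move=> ec.
have e3 := chart_id Xv Xw; rewrite d0 mulr0 in e3.
move: e3 => /esym /eqP; rewrite mulf_eq0 mulf_eq0 (negPf Xv) (negPf Xw) !orbF subr_eq0 => /eqP e3.
have [tv0 tw0] := colc_ok e3 ec.
move: e3; rewrite tv0 tw0 addr0 => /esym /eqP; rewrite sqrf_eq0 subr_eq0 => /eqP ea.
exists (Xc w / Xc v).
have c2w : c2 w = c2 v / Xc v * Xc w by rewrite -/(av v) ea /av divfK.
move: tv0 tw0; rewrite /tv !dotvv => /eqP tv0 /eqP tw0.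
move: tv0 tw0; rewrite !mulf_eq0 !invr_eq0 !expf_eq0 (negPf Xv) (negPf Xw) !andbF !orbF.
rewrite !addr_eq0 => /eqP hv /eqP hw.
have hX : Xc w = Xc w / Xc v * Xc v by rewrite divfK.
have Yv : Yc v = - c2 v ^+ 2 / Xc v by rewrite -hv; field.
have Yw : Yc w = - c2 w ^+ 2 / Xc w by rewrite -hw; field.
have hY : Yc w = Xc w / Xc v * Yc v by rewrite Yw Yv c2w; field; rewrite Xv Xw.
have hZ : c2 w = Xc w / Xc v * c2 v by rewrite c2w; field.
exact: propl hX hY hZ.
Qed.

End Col.


Lemma colorable_of (T C : finType) (e : rel T) (f : T -> C) (k : nat) (x0 : T) :
  (forall x y, e x y -> f x != f y) -> (#|[set f x | x in T]| <= k)%N -> colorable e k.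
Proof.
move=> hp hk.
have Ix0 : f x0 \in [set f x | x in T] by apply: imset_f.
apply/existsP; exists [ffun x => widen_ord hk (enum_rank_in Ix0 (f x))].
apply/forallP => x; apply/forallP => y; apply/implyP => exy.
rewrite !ffunE; apply/eqP => /(congr1 val) /= /val_inj.
have Hx : f x \in [set f x | x in T] by apply: imset_f.
have Hy : f y \in [set f x | x in T] by apply: imset_f.
move/(enum_rank_in_inj Hx Hy) => exy'.
by move: (hp _ _ exy); rewrite exy' eqxx.
Qed.

Lemma chrom_le (T : finType) (e : rel T) (k : nat) :
  colorable e k -> (chromatic_number e <= k)%N.
Proof.
move=> ck; rewrite /chromatic_number.
case: (leqP k #|T|) => hk.
  rewrite leqNgt; apply/negP => /(before_find 0%N).
  by rewrite nth_iota ?ltnS // add0n ck.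
apply: leq_trans (find_size _ _) _.
by rewrite size_iota.
Qed.


Section Main.
Variables (F : finFieldType) (s : nat) (i xi : F).
Hypotheses (hi : i ^+ 2 = -1) (h2 : (2%:R : F) != 0) (xi0 : xi != 0)
  (frD : forall x y : F, (x + y) ^+ s = x ^+ s + y ^+ s)
  (frN : forall x : F, (- x) ^+ s = - x ^+ s)
  (frfr : forall x : F, (x ^+ s) ^+ s = x)
  (hxi : (xi ^+ 2) ^+ s != xi ^+ 2) (s1 : (1 < s)%N).

Definition Wset := [set w : F | (w ^+ s == -1 * w ^+ 1)%R].
Definition Sset : {set option (bool * F * bool)} :=
  None |: [set Some x | x in setX (setX [set: bool] Wset) [set: bool]].

Lemma inW (x : F) : x - x ^+ s \in Wset.
Proof. by rewrite inE frD frN frfr expr1 mulN1r opprB. Qed.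
Lemma W0 : (0 : F) \in Wset.
Proof. by rewrite inE expr0n /= gtn_eqF ?(ltn_trans _ s1) // expr0n mulr0. Qed.

Lemma inS b (w : F) g : w \in Wset -> Some (b, w, g) \in Sset.
Proof.
move=> hw; apply/setU1P; right; apply/imsetP; exists (b, w, g) => //.
by rewrite !inE /= andbT; rewrite inE in hw.
Qed.

Lemma col_in v : col s i xi v \in Sset.
Proof.
rewrite /col /coli /colc.
case: ifP => _; first by case: ifP => _; [apply/setU1P; left|apply: inS; case: ifP => _; [exact: inW|exact: W0]].
case: ifP => _; first by apply/setU1P; left.
by case: ifP => _; apply: inS; apply: inW.
Qed.

Lemma card_S : (#|Sset| <= 4 * s + 1)%N.
Proof.
rewrite /Sset cardsU1.
have hW : (#|Wset| <= s)%N by apply: card_roots_le.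
apply: leq_trans (leq_add (leq_b1 _) (leq_imset_card _ _)) _.
rewrite cardsX cardsX !cardsT card_bool.
by lia.
Qed.


Definition rep (P : PG2 F) : 'rV[F]_3 :=
  xchoose (existsP (valP P : [exists v, (v != 0) && (val P == span1 v)])).

Lemma repP P : (rep P != 0) && (val P == span1 (rep P)).
Proof. exact: (xchooseP (existsP (valP P : [exists v, (v != 0) && (val P == span1 v)]))). Qed.

Lemma dotZ (a b : F) (v w : 'rV[F]_3) : dot3 (a *: v) (b *: w) = a * b * dot3 v w.
Proof. by rewrite !dot3E !mxE; ring. Qed.

Lemma span1Z (v : 'rV[F]_3) (l : F) : l != 0 -> span1 (l *: v) = span1 v.
Proof.
move=> l0; apply/setP => x; apply/imsetP/imsetP => [[a _ ->]|[a _ ->]].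
  by exists (a * l) => //; rewrite scalerA.
by exists (a / l) => //; rewrite scalerA divfK.
Qed.

Lemma adj_dot P Q : ER_adj P Q -> dot3 (rep P) (rep Q) = 0.
Proof.
case/andP => _ /existsP [x /andP [xP /existsP [y /andP [yQ /and3P [x0 y0 /eqP d]]]]].
move: xP yQ; rewrite (eqP (andP (repP P)).2) (eqP (andP (repP Q)).2).
case/imsetP => a _ ex; case/imsetP => b _ ey.
move: d; rewrite ex ey dotZ => /eqP; rewrite !mulf_eq0 => /orP [/orP [/eqP a0|/eqP b0]|/eqP //].
  by move: x0; rewrite ex a0 scale0r eqxx.
by move: y0; rewrite ey b0 scale0r eqxx.
Qed.

Lemma proper_col P Q : ER_adj P Q -> col s i xi (rep P) != col s i xi (rep Q).
Proof.
move=> adj; apply/eqP => ec.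
have [l el] := col_ok hi h2 xi0 frD frN hxi (andP (repP P)).1 (andP (repP Q)).1 (adj_dot adj) ec.
have l0 : l != 0.
  by apply/eqP => l0; move: (andP (repP Q)).1; rewrite el l0 scale0r eqxx.
move: adj => /andP [/eqP PQ _]; apply: PQ; apply/val_inj.
by rewrite (eqP (andP (repP P)).2) (eqP (andP (repP Q)).2) el span1Z.
Qed.

End Main.

Theorem mainTheorem2 (p r : nat) (F : finFieldType) :
  prime p -> odd p -> (0 < r)%N -> #|F| = (p ^ (2 * r))%N ->
  (chromatic_number (@ER_adj F) <= 4 * p ^ r + 1)%N.
Proof.
move=> pp op hr hF.
set s := (p ^ r)%N.
have p3 : (3 <= p)%N.
  have := prime_gt1 pp; case: p op pp {hF s} => [|[|[|]]] //.
have s3 : (3 <= s)%N.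
  apply: leq_trans p3 _; rewrite /s -{1}(expn1 p) leq_pexp2l //; lia.
have hFs : #|F| = (s * s)%N by rewrite hF /s -expnD addnn -mul2n.
have ch := pchF pp hF.
have h2 := two_neq0 ch op.
have os : odd s by rewrite /s oddX op orbT.
have [i hi] : exists i : F, i ^+ 2 = -1.
  have hk : s = (2 * s./2 + 1)%N.
    by rewrite -[in LHS](odd_double_half s) os -muln2 mulnC addnC.
  move: (s./2) hk => k hk.
  apply: (@sqrt_m1 F (k * k.+1)).
    rewrite muln_gt0 /=; lia.
  rewrite hFs hk; lia.
have [xi hxi] : exists xi : F, (xi ^+ 2) ^+ s != xi ^+ 2.
  case: (boolP [exists xi : F, (xi ^+ 2) ^+ s != xi ^+ 2]) => [/existsP //|/existsPn H].
  have : (#|[set x : F | (x ^+ (2 * s) == 1 * x ^+ 2)%R]| <= 2 * s)%N.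
    apply: card_roots_le; lia.
  have -> : [set x : F | (x ^+ (2 * s) == 1 * x ^+ 2)%R] = setT.
    by apply/setP => x; rewrite !inE mul1r mulnC exprM exprAC; move: (H x); rewrite negbK.
  by rewrite cardsT hFs; nia.
have xi0 : xi != 0.
  have zs : (0:F) ^+ s = 0 by rewrite expr0n gtn_eqF //; lia.
  by apply/eqP => x0; move: hxi; rewrite x0 expr2 mulr0 zs eqxx.
have fD : forall x y : F, (x + y) ^+ s = x ^+ s + y ^+ s by move=> x y; exact: (frD pp hF x y).
have fN : forall x : F, (- x) ^+ s = - x ^+ s by move=> x; exact: (frN pp hF x).
have ff : forall x : F, (x ^+ s) ^+ s = x by move=> x; exact: (frfr hF x).
have s1 : (1 < s)%N by lia.
have v0 : (const_mx 1 : 'rV[F]_3) != 0.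
  apply/eqP => /rowP /(_ o0); rewrite !mxE => /eqP; by rewrite oner_eq0.
have pt : is_proj_point (span1 (const_mx 1 : 'rV[F]_3)).
  by apply/existsP; exists (const_mx 1); rewrite v0 eqxx.
apply: chrom_le.
apply: (@colorable_of _ _ _ (fun P => col s i xi (rep P)) _ (Sub _ pt)).
  by move=> P Q adj; exact: (proper_col hi h2 xi0 fD fN hxi adj).
apply: (leq_trans _ (card_S h2 xi0 hxi s1)).
apply: subset_leq_card; apply/subsetP => c /imsetP [P _ ->].
exact: col_in fD fN ff s1 _.
Qed.
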